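(* Let $p$ be an indecomposable permutation avoiding $3241$ and $4321$ that contains the pattern $321$, with associated triple $(a,b,c)$. If $c$ is finite, then $c>b$.
   Context: Permutations of $[n]$ are in one-line notation; pattern containment/avoidance is in the usual classical sense. Indecomposable: no $k$ with $1\le k\le n-1$ and $\{p_1,\dots,p_k\}=\{1,\dots,k\}$. An entry is a left-to-right maximum (LRMax) if it exceeds all entries to its left. For a $321$-containing permutation $p$, the associated triple $(a,b,c)$ is: $a$ is the rightmost entry of $p$ that plays the role of the ''1'' in some occurrence of $321$; $b$ is the rightmost entry to the left of $a$ that exceeds $a$; $c$ is the first entry to the right of $a$ that is not a LRMax, with $c=\infty$ if no such entry exists. *)

(* Defs.v *)
From mathcomp Require Import all_boot.
Set Implicit Arguments. Unset Strict Implicit. Unset Printing Implicit Defensive.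

(* A permutation of [n] in one-line notation: the sequence p_1 ... p_n,
   stored as a seq nat; positions are 0-indexed (entry p_{i+1} = nth 0 p i). *)
Definition is_perm (p : seq nat) : Prop := perm_eq p (iota 1 (size p)).

Definition ent (p : seq nat) (i : nat) : nat := nth 0 p i.

Definition order_iso (t q : seq nat) : Prop :=
  size t = size q /\
  forall i j, i < size q -> j < size q -> (ent t i < ent t j) = (ent q i < ent q j).

Definition contains (p q : seq nat) : Prop :=
  exists t, subseq t p /\ order_iso t q.

Definition avoids (p q : seq nat) : Prop := ~ contains p q.

Definition indecomposable (p : seq nat) : Prop :=
  forall k, 1 <= k -> k <= (size p).-1 -> ~ perm_eq (take k p) (iota 1 k).

Definition plays_one_in_321 (p : seq nat) (k : nat) : Prop :=
  exists i j, [/\ i < j, j < k, k < size p,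
                  ent p j < ent p i & ent p k < ent p j].

Definition is_a_pos (p : seq nat) (ka : nat) : Prop :=
  plays_one_in_321 p ka /\ forall k, plays_one_in_321 p k -> k <= ka.

Definition is_b_pos (p : seq nat) (ka kb : nat) : Prop :=
  [/\ kb < ka, ent p ka < ent p kb &
      forall j, kb < j -> j < ka -> ~ (ent p ka < ent p j)].

Definition is_LRMax (p : seq nat) (k : nat) : Prop :=
  forall i, i < k -> ent p i < ent p k.

(* position kc holds c (finite case): the first entry to the right of a
   that is not a LRMax *)
Definition is_c_pos (p : seq nat) (ka kc : nat) : Prop :=
  [/\ ka < kc, kc < size p, ~ is_LRMax p kc &
      forall k, ka < k -> k < kc -> is_LRMax p k].

(* Main.v *)
Require Import Defs.
From mathcomp Require Import all_boot.

Lemma sub_cons0 (s : seq nat) i t : i < size s -> subseq t (drop i.+1 s) ->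
  subseq (nth 0 s i :: t) s.
Proof.
move=> hi ht; rewrite -[s in subseq _ s](cat_take_drop i) (drop_nth 0 hi).
apply: (@cat_subseq _ [::] _ (take i s)) => //=; rewrite ?eqxx // sub0seq // .
Qed.

Lemma sub_cons (s : seq nat) m i t : m <= i -> i < size s ->
  subseq t (drop i.+1 s) -> subseq (nth 0 s i :: t) (drop m s).
Proof.
move=> hm hi ht.
have -> : nth 0 s i = nth 0 (drop m s) (i - m) by rewrite nth_drop subnKC.
apply: sub_cons0; first by rewrite size_drop ltn_sub2r // (leq_ltn_trans hm).
by rewrite drop_drop addnC addnS subnKC.
Qed.

Lemma distinct p i j : is_perm p -> i < size p -> j < size p -> i != j ->
  ent p i != ent p j.
Proof.
move=> hp hi hj hij; rewrite /ent nth_uniq //.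
by rewrite (perm_uniq hp) iota_uniq.
Qed.

Arguments distinct {p i j}.

Theorem corollary5 (p : seq nat) :
  is_perm p -> indecomposable p ->
  avoids p [:: 3; 2; 4; 1] -> avoids p [:: 4; 3; 2; 1] ->
  contains p [:: 3; 2; 1] ->
  forall ka kb kc : nat,
    is_a_pos p ka -> is_b_pos p ka kb -> is_c_pos p ka kc ->
    ent p kb < ent p kc.
Proof.
move=> hp _ h3241 _ _ ka kb kc [[i [j [hij hjk hks h1 h2]]] amax] [hba hab bnot]
  [hac hcs _ _].
have hbs : kb < size p by apply: ltn_trans hcs; apply: ltn_trans hac.
case: (ltngtP (ent p kb) (ent p kc)) => // hcb; last first.
  by move: (distinct hp hbs hcs (negbT (ltn_eqF (ltn_trans hba hac)))); rewrite hcb eqxx.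
exfalso.
case hh: (has (fun i => ent p kb < ent p i) (iota 0 kb)).
  move/hasP: hh => [i' hi' hlt]; rewrite mem_iota add0n in hi'.
  have : plays_one_in_321 p kc.
    by exists i', kb; split => //; apply: ltn_trans hba hac.
  by move/amax; rewrite leqNgt hac.
move/hasPn: hh => hall.
have hjb : j <= kb.
  rewrite leqNgt; apply/negP=> hbj; apply: (bnot j) => //.
have hjs : j < size p by exact: ltn_trans hjk hks.
have his : i < size p by exact: ltn_trans hij hjs.
have hib : i < kb by apply: leq_trans hij hjb.
have hle : ent p i <= ent p kb.
  by rewrite leqNgt; apply: hall; rewrite mem_iota add0n.
move: hjb; rewrite leq_eqVlt => /orP[/eqP ejb|hjb].
  by subst j; move: hle; rewrite leqNgt h1.
have hlt : ent p i < ent p kb.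
  by rewrite ltn_neqAle hle distinct // ltn_eqF.
apply: h3241; exists [:: ent p i; ent p j; ent p kb; ent p ka]; split.
  rewrite /ent -[p in subseq _ p]drop0; apply: sub_cons => //; apply: sub_cons => //.
  apply: sub_cons => //; apply: sub_cons => //; exact: sub0seq.
split => // x y hx hy.
have e1 : ent p ka < ent p i by apply: ltn_trans h1.
have e2 : ent p ka < ent p kb by apply: ltn_trans hlt.
have e3 : ent p j < ent p kb by apply: ltn_trans hlt.
do 4?[case: x hx => [|x] hx]; do 4?[case: y hy => [|y] hy]; rewrite /ent //=;
  rewrite ?ltnn //; fold (ent p i) (ent p j) (ent p kb) (ent p ka);
  by [ assumption | apply/negbTE; rewrite -leqNgt; apply: ltnW; assumption ].
Qed.
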